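(* Let $S$ be an inverse semigroup that is a separately Scott-continuous mirror semigroup, with semilattice of idempotents $\Sigma$. Then for all $s,t\in S$, $s \ll t$ if and only if $s\leqslant t$ and $\sigma(s) \prec\!\!\!\prec \sigma(t)$.
   Context: An inverse semigroup is a semigroup $S$ in which every $s$ has a unique $s^*$ with $ss^*s=s$ and $s^*ss^*=s^*$. $\Sigma=\Sigma(S)$ is the set of idempotents. The intrinsic order is $s\leqslant t$ iff $s=t\epsilon$ for some idempotent $\epsilon$. A subset is directed if nonempty and any two elements have an upper bound in it. $S$ is a mirror semigroup if every directed subset of $\Sigma$ having a supremum in $(\Sigma,\leqslant)$ also has a supremum in $(S,\leqslant)$. $S$ is separately Scott-continuous if for every directed $D\subseteq S$ with a supremum $\bigvee D$ in $S$ and every $s\in S$, $\bigvee(Ds)$ exists in $S$ and equals $(\bigvee D)s$. The source map is $\sigma(s)=s^*s$. In a poset, $x$ is way-below $y$ if for every directed subset $D$ that has a supremum with $y\leqslant \sup D$, there is $d\in D$ with $x\leqslant d$. $\ll$ denotes the way-below relation of the poset $(S,\leqslant)$ and $\prec\!\!\!\prec$ the way-below relation of the poset $(\Sigma,\leqslant)$. *)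

(* Defs.v *)
Set Implicit Arguments.
Section InvSemigroup.
Variable T : Type.
Variable mul : T -> T -> T.
Variable inv : T -> T.

Definition inverse_semigroup : Prop :=
  (forall a b c, mul a (mul b c) = mul (mul a b) c) /\
  (forall s, mul (mul s (inv s)) s = s /\ mul (mul (inv s) s) (inv s) = inv s) /\
  (forall s x, mul (mul s x) s = s -> mul (mul x s) x = x -> x = inv s).

Definition idem (e : T) : Prop := mul e e = e.

Definition allT (x : T) : Prop := True.

Definition ile (s t : T) : Prop := exists e, idem e /\ s = mul t e.

Definition src (s : T) : T := mul (inv s) s.

Definition directed_in (P : T -> Prop) (D : T -> Prop) : Prop :=
  (exists d, D d) /\ (forall d, D d -> P d) /\
  (forall a b, D a -> D b -> exists c, D c /\ ile a c /\ ile b c).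

Definition is_sup_in (P : T -> Prop) (D : T -> Prop) (z : T) : Prop :=
  P z /\ (forall d, D d -> ile d z) /\
  (forall y, P y -> (forall d, D d -> ile d y) -> ile z y).

Definition way_below_in (P : T -> Prop) (x y : T) : Prop :=
  forall D z, directed_in P D -> is_sup_in P D z -> ile y z ->
    exists d, D d /\ ile x d.

Definition mirror : Prop :=
  forall D, directed_in idem D -> (exists z, is_sup_in idem D z) ->
    exists w, is_sup_in allT D w.

Definition rtrans (D : T -> Prop) (s : T) : T -> Prop :=
  fun x => exists d, D d /\ x = mul d s.

Definition sep_scott_continuous : Prop :=
  forall D z, directed_in allT D -> is_sup_in allT D z ->
    forall s, is_sup_in allT (rtrans D s) (mul z s).

End InvSemigroup.

(* Main.v *)
Require Import Defs.
From Stdlib Require Import Setoid.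


Lemma assoc {T} {mul : T -> T -> T} {inv : T -> T} (HS : inverse_semigroup mul inv) :
  forall a b c, mul a (mul b c) = mul (mul a b) c.
Proof. apply HS. Qed.

Ltac norm HS := repeat rewrite <- (assoc HS).
Ltac normin HS H := repeat rewrite <- (assoc HS) in H.

Lemma r1 {T} {mul : T -> T -> T} {inv : T -> T} (HS : inverse_semigroup mul inv) s :
  mul s (mul (inv s) s) = s.
Proof. rewrite (assoc HS). pose proof HS as [_ [H _]]. apply H. Qed.

Lemma r2 {T} {mul : T -> T -> T} {inv : T -> T} (HS : inverse_semigroup mul inv) s :
  mul (inv s) (mul s (inv s)) = inv s.
Proof. rewrite (assoc HS). pose proof HS as [_ [H _]]. apply H. Qed.

Lemma r1e {T} {mul : T -> T -> T} {inv : T -> T} (HS : inverse_semigroup mul inv) s y :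
  mul s (mul (inv s) (mul s y)) = mul s y.
Proof.
  pose proof (f_equal (fun a => mul a y) (r1 HS s)) as H; cbv beta in H.
  normin HS H. exact H.
Qed.

Lemma r2e {T} {mul : T -> T -> T} {inv : T -> T} (HS : inverse_semigroup mul inv) s y :
  mul (inv s) (mul s (mul (inv s) y)) = mul (inv s) y.
Proof.
  pose proof (f_equal (fun a => mul a y) (r2 HS s)) as H; cbv beta in H.
  normin HS H. exact H.
Qed.

Lemma uniq {T} {mul : T -> T -> T} {inv : T -> T} (HS : inverse_semigroup mul inv) s x :
  mul s (mul x s) = s -> mul x (mul s x) = x -> x = inv s.
Proof.
  intros H1 H2. pose proof HS as [_ [_ H]]. apply H; rewrite <- (assoc HS); assumption.
Qed.


Lemma idre {T} {mul : T -> T -> T} {inv : T -> T} (HS : inverse_semigroup mul inv) e y :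
  idem mul e -> mul e (mul e y) = mul e y.
Proof. intro He. unfold idem in He. rewrite (assoc HS), He. reflexivity. Qed.

Lemma inv_idem {T} {mul : T -> T -> T} {inv : T -> T} (HS : inverse_semigroup mul inv) e :
  idem mul e -> inv e = e.
Proof.
  intro He. unfold idem in He. symmetry. apply (uniq HS); rewrite !He; reflexivity.
Qed.

Lemma inv_inv {T} {mul : T -> T -> T} {inv : T -> T} (HS : inverse_semigroup mul inv) a :
  inv (inv a) = a.
Proof.
  symmetry. apply (uniq HS). apply (r2 HS). apply (r1 HS).
Qed.

Lemma idem_mul {T} {mul : T -> T -> T} {inv : T -> T} (HS : inverse_semigroup mul inv) e f :
  idem mul e -> idem mul f -> idem mul (mul e f).
Proof.
  intros He Hf.
  set (x := inv (mul e f)).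
  pose proof (r1 HS (mul e f)) as Hx1. fold x in Hx1.
  pose proof (r2 HS (mul e f)) as Hx2. fold x in Hx2.
  normin HS Hx1. normin HS Hx2.
  assert (Hx2e : forall y, mul x (mul e (mul f (mul x y))) = mul x y).
  { intro y. pose proof (f_equal (fun a => mul a y) Hx2) as H; cbv beta in H.
    normin HS H. exact H. }
  assert (Hfxe : mul f (mul x e) = x).
  { unfold x. apply (uniq HS).
    - fold x. norm HS. rewrite !(idre HS _ _ He), !(idre HS _ _ Hf). exact Hx1.
    - fold x. norm HS. rewrite !(idre HS _ _ He), !(idre HS _ _ Hf).
      rewrite Hx2e. reflexivity. }
  assert (Hxx : idem mul x).
  { unfold idem. transitivity (mul (mul f (mul x e)) (mul f (mul x e))).
    - rewrite Hfxe. reflexivity.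
    - norm HS. rewrite Hx2e. exact Hfxe. }
  rewrite <- (inv_inv HS (mul e f)). fold x. rewrite (inv_idem HS _ Hxx). exact Hxx.
Qed.

Lemma comm {T} {mul : T -> T -> T} {inv : T -> T} (HS : inverse_semigroup mul inv) e f :
  idem mul e -> idem mul f -> mul e f = mul f e.
Proof.
  intros He Hf.
  assert (Hef := idem_mul HS _ _ He Hf).
  assert (Hfe := idem_mul HS _ _ Hf He).
  rewrite <- (inv_idem HS _ Hef). symmetry. apply (uniq HS).
  - norm HS. rewrite !(idre HS _ _ He), !(idre HS _ _ Hf).
    unfold idem in Hef. normin HS Hef. exact Hef.
  - norm HS. rewrite !(idre HS _ _ He), !(idre HS _ _ Hf).
    unfold idem in Hfe. normin HS Hfe. exact Hfe.
Qed.

Lemma commr {T} {mul : T -> T -> T} {inv : T -> T} (HS : inverse_semigroup mul inv) e f y :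
  idem mul e -> idem mul f -> mul e (mul f y) = mul f (mul e y).
Proof.
  intros He Hf. rewrite !(assoc HS), (comm HS _ _ He Hf). reflexivity.
Qed.

Lemma src_idem {T} {mul : T -> T -> T} {inv : T -> T} (HS : inverse_semigroup mul inv) s :
  idem mul (src mul inv s).
Proof. unfold idem, src. norm HS. rewrite (r2e HS). reflexivity. Qed.

Lemma bbinv_idem {T} {mul : T -> T -> T} {inv : T -> T} (HS : inverse_semigroup mul inv) s :
  idem mul (mul s (inv s)).
Proof. unfold idem. norm HS. rewrite (r1e HS). reflexivity. Qed.

Lemma comm_src {T} {mul : T -> T -> T} {inv : T -> T} (HS : inverse_semigroup mul inv) e t y :
  idem mul e -> mul e (mul (inv t) (mul t y)) = mul (inv t) (mul t (mul e y)).
Proof.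
  intro He. pose proof (commr HS e (src mul inv t) y He (src_idem HS t)) as H.
  unfold src in H. normin HS H. exact H.
Qed.

Lemma inv_mul {T} {mul : T -> T -> T} {inv : T -> T} (HS : inverse_semigroup mul inv) a b :
  inv (mul a b) = mul (inv b) (inv a).
Proof.
  symmetry. apply (uniq HS).
  - pose proof (commr HS _ _ b (bbinv_idem HS b) (src_idem HS a)) as H.
    unfold src in H. normin HS H.
    norm HS. rewrite H. rewrite (r1e HS). rewrite (r1 HS). reflexivity.
  - pose proof (commr HS _ _ (inv a) (src_idem HS a) (bbinv_idem HS b)) as H.
    unfold src in H. normin HS H.
    norm HS. rewrite H. rewrite (r2e HS). rewrite (r2 HS). reflexivity.
Qed.

Lemma ile_refl {T} {mul : T -> T -> T} {inv : T -> T} (HS : inverse_semigroup mul inv) t :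
  ile mul t t.
Proof. exists (src mul inv t). split. apply (src_idem HS). unfold src. symmetry. apply (r1 HS). Qed.

Lemma ile_trans {T} {mul : T -> T -> T} {inv : T -> T} (HS : inverse_semigroup mul inv) a b c :
  ile mul a b -> ile mul b c -> ile mul a c.
Proof.
  intros [e [He Ha]] [f [Hf Hb]]. exists (mul f e). split.
  apply (idem_mul HS); assumption. rewrite Ha, Hb. norm HS. reflexivity.
Qed.

Lemma ile_idem {T} {mul : T -> T -> T} {inv : T -> T} (HS : inverse_semigroup mul inv) w z :
  ile mul w z -> idem mul z -> idem mul w.
Proof. intros [e [He Hw]] Hz. rewrite Hw. apply (idem_mul HS); assumption. Qed.

Lemma ile_mull {T} {mul : T -> T -> T} {inv : T -> T} (HS : inverse_semigroup mul inv) t a b :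
  ile mul a b -> ile mul (mul t a) (mul t b).
Proof. intros [e [He Ha]]. exists e. split. exact He. rewrite Ha. norm HS. reflexivity. Qed.

Lemma ile_src {T} {mul : T -> T -> T} {inv : T -> T} (HS : inverse_semigroup mul inv) s t :
  ile mul s t -> s = mul t (src mul inv s).
Proof.
  intros [e [He Hs]]. subst s. unfold src. rewrite (inv_mul HS), (inv_idem HS _ He).
  norm HS. rewrite (comm_src HS _ _ _ He). rewrite (r1e HS). rewrite (He : mul e e = e).
  reflexivity.
Qed.

Lemma ile_inv {T} {mul : T -> T -> T} {inv : T -> T} (HS : inverse_semigroup mul inv) s t :
  ile mul s t -> ile mul (inv s) (inv t).
Proof.
  intros [e [He Hs]]. subst s. exists (mul t (mul e (inv t))). split.
  - unfold idem. norm HS. rewrite (comm_src HS _ _ _ He). rewrite (r1e HS).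
    rewrite (idre HS _ _ He). reflexivity.
  - rewrite (inv_mul HS), (inv_idem HS _ He).
    rewrite <- (comm_src HS _ _ _ He). rewrite (r2 HS). reflexivity.
Qed.

Lemma ile_src_mono {T} {mul : T -> T -> T} {inv : T -> T} (HS : inverse_semigroup mul inv) s t :
  ile mul s t -> ile mul (src mul inv s) (src mul inv t).
Proof.
  intros [e [He Hs]]. subst s. exists e. split. exact He.
  unfold src. rewrite (inv_mul HS), (inv_idem HS _ He). norm HS.
  rewrite (comm_src HS _ _ _ He). rewrite (He : mul e e = e). reflexivity.
Qed.

Lemma inv_d_z {T} {mul : T -> T -> T} {inv : T -> T} (HS : inverse_semigroup mul inv) d z :
  ile mul d z -> mul (inv d) z = src mul inv d.
Proof.
  intros [e [He Hd]]. subst d. unfold src. rewrite (inv_mul HS), (inv_idem HS _ He).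
  pose proof (comm HS _ _ He (src_idem HS z)) as C. unfold src in C. normin HS C.
  norm HS. rewrite C. rewrite (comm_src HS _ _ _ He). rewrite (He : mul e e = e). reflexivity.
Qed.

Lemma tw_t {T} {mul : T -> T -> T} {inv : T -> T} (HS : inverse_semigroup mul inv) t w :
  ile mul (src mul inv t) w -> idem mul w -> mul t w = t.
Proof.
  intros [e [He H]] Hw. unfold src in H.
  assert (Ht : t = mul t (mul w e)). { rewrite <- H. symmetry. apply (r1 HS). }
  rewrite Ht at 1. norm HS. rewrite (comm HS _ _ He Hw). rewrite (idre HS _ _ Hw).
  symmetry. exact Ht.
Qed.

Lemma sup_ext {T} (mul : T -> T -> T) P (D D' : T -> Prop) z :
  (forall x, D x <-> D' x) -> is_sup_in mul P D z -> is_sup_in mul P D' z.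
Proof.
  intros E [H1 [H2 H3]]. split; [exact H1|split].
  - intros d Hd. apply H2. apply E. exact Hd.
  - intros y Hy Hu. apply H3. exact Hy. intros d Hd. apply Hu. apply E. exact Hd.
Qed.

Lemma sup_inv {T} {mul : T -> T -> T} {inv : T -> T} (HS : inverse_semigroup mul inv) F z :
  is_sup_in mul (@allT T) F z ->
  is_sup_in mul (@allT T) (fun x => exists y, F y /\ x = inv y) (inv z).
Proof.
  intros [_ [H2 H3]]. split; [exact I|split].
  - intros d [y [Hy ->]]. apply (ile_inv HS). apply H2. exact Hy.
  - intros y' _ Hu. rewrite <- (inv_inv HS y'). apply (ile_inv HS). apply H3. exact I.
    intros d Hd. rewrite <- (inv_inv HS d). apply (ile_inv HS). apply Hu.
    exists d. split; [exact Hd|reflexivity].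
Qed.

Lemma dir_allT {T} (mul : T -> T -> T) P D : directed_in mul P D -> directed_in mul (@allT T) D.
Proof. intros [H1 [_ H3]]. split; [exact H1|split; [intros; exact I|exact H3]]. Qed.

Theorem lemma4p4 (T : Type) (mul : T -> T -> T) (inv : T -> T)
  (HS : inverse_semigroup mul inv)
  (Hmirror : mirror mul)
  (Hscott : sep_scott_continuous mul) :
  forall s t : T,
    way_below_in mul (@allT T) s t <->
    (ile mul s t /\ way_below_in mul (idem mul) (src mul inv s) (src mul inv t)).
Proof.
  intros s t. split.
  - intro Hwb.
    assert (Hst : ile mul s t).
    { destruct (Hwb (fun x => x = t) t) as [d [-> Hd]].
      - split. exists t. reflexivity. split. intros; exact I.
        intros a b -> ->. exists t. split. reflexivity. split; apply (ile_refl HS).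
      - split. exact I. split. intros d ->. apply (ile_refl HS).
        intros y _ Hu. apply Hu. reflexivity.
      - apply (ile_refl HS).
      - exact Hd. }
    split. exact Hst.
    intros D z HD Hz Hle.
    destruct (Hmirror D HD (ex_intro _ z Hz)) as [w Hw].
    assert (Hwz : ile mul w z).
    { apply (proj2 (proj2 Hw)). exact I. apply (proj1 (proj2 Hz)). }
    assert (Hwi : idem mul w) by (apply (ile_idem HS _ _ Hwz); apply (proj1 Hz)).
    assert (Hzw : ile mul z w).
    { apply (proj2 (proj2 Hz)). exact Hwi. apply (proj1 (proj2 Hw)). }
    assert (Htw : mul t w = t) by (apply (tw_t HS); [apply (ile_trans HS _ _ _ Hle Hzw)|exact Hwi]).
    pose (E := fun x => exists d, D d /\ x = mul t d).
    assert (HEd : directed_in mul (@allT T) E).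
    { destruct HD as [[d0 Hd0] [Hi Hdir]]. split. exists (mul t d0). exists d0. split; [exact Hd0|reflexivity].
      split. intros; exact I.
      intros a b [d1 [Hd1 ->]] [d2 [Hd2 ->]].
      destruct (Hdir d1 d2 Hd1 Hd2) as [c [Hc [H1 H2]]].
      exists (mul t c). split. exists c. split; [exact Hc|reflexivity].
      split; apply (ile_mull HS); assumption. }
    assert (HEs : is_sup_in mul (@allT T) E t).
    { pose proof (Hscott D w (dir_allT _ _ _ HD) Hw (inv t)) as H1.
      pose proof (sup_inv HS _ _ H1) as H2.
      rewrite (inv_mul HS), (inv_inv HS), (inv_idem HS _ Hwi), Htw in H2.
      revert H2. apply sup_ext. intro x. split.
      - intros [y [[d [Hd ->]] ->]]. exists d. split. exact Hd.
        rewrite (inv_mul HS), (inv_inv HS), (inv_idem HS _ (proj1 (proj2 HD) d Hd)). reflexivity.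
      - intros [d [Hd ->]]. exists (mul d (inv t)). split. exists d. split; [exact Hd|reflexivity].
        rewrite (inv_mul HS), (inv_inv HS), (inv_idem HS _ (proj1 (proj2 HD) d Hd)). reflexivity. }
    destruct (Hwb E t HEd HEs (ile_refl HS t)) as [x [[d [Hd ->]] Hsx]].
    exists d. split. exact Hd.
    assert (Hdi : idem mul d) by exact (proj1 (proj2 HD) d Hd).
    apply (ile_trans HS _ _ _ (ile_src_mono HS _ _ Hsx)).
    exists (src mul inv t). split. apply (src_idem HS).
    unfold src. rewrite (inv_mul HS), (inv_idem HS _ Hdi). norm HS.
    rewrite (comm_src HS _ _ _ Hdi). rewrite (Hdi : mul d d = d).
    pose proof (comm HS _ _ Hdi (src_idem HS t)) as C. unfold src in C. normin HS C.
    symmetry. exact C.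
  - intros [Hst Hwb] D z HD Hz Htz.
    pose (Di := fun x => exists d, D d /\ x = inv d).
    assert (HDi : directed_in mul (@allT T) Di).
    { destruct HD as [[d0 Hd0] [_ Hdir]]. split. exists (inv d0). exists d0. split; [exact Hd0|reflexivity].
      split. intros; exact I.
      intros a b [d1 [Hd1 ->]] [d2 [Hd2 ->]].
      destruct (Hdir d1 d2 Hd1 Hd2) as [c [Hc [H1 H2]]].
      exists (inv c). split. exists c. split; [exact Hc|reflexivity].
      split; apply (ile_inv HS); assumption. }
    pose proof (Hscott Di (inv z) HDi (sup_inv HS _ _ Hz) z) as H1.
    pose (F := fun x => exists d, D d /\ x = src mul inv d).
    assert (HFs : is_sup_in mul (idem mul) F (src mul inv z)).
    { assert (H2 : is_sup_in mul (@allT T) F (src mul inv z)).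
      { revert H1. apply sup_ext. intro x. split.
        - intros [y [[d [Hd ->]] ->]]. exists d. split. exact Hd.
          apply (inv_d_z HS). apply (proj1 (proj2 Hz)). exact Hd.
        - intros [d [Hd ->]]. exists (inv d). split. exists d. split; [exact Hd|reflexivity].
          symmetry. apply (inv_d_z HS). apply (proj1 (proj2 Hz)). exact Hd. }
      destruct H2 as [_ [H2 H3]]. split. apply (src_idem HS). split. exact H2.
      intros y _ Hu. apply H3. exact I. exact Hu. }
    assert (HFd : directed_in mul (idem mul) F).
    { destruct HD as [[d0 Hd0] [_ Hdir]]. split. exists (src mul inv d0). exists d0. split; [exact Hd0|reflexivity].
      split. intros x [d [_ ->]]. apply (src_idem HS).
      intros a b [d1 [Hd1 ->]] [d2 [Hd2 ->]].
      destruct (Hdir d1 d2 Hd1 Hd2) as [c [Hc [H3 H4]]].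
      exists (src mul inv c). split. exists c. split; [exact Hc|reflexivity].
      split; apply (ile_src_mono HS); assumption. }
    destruct (Hwb F (src mul inv z) HFd HFs (ile_src_mono HS _ _ Htz)) as [x [[d [Hd ->]] [f [Hf Hsd]]]].
    exists d. split. exact Hd.
    assert (Hdz : ile mul d z) by (apply (proj1 (proj2 Hz)); exact Hd).
    exists (mul (src mul inv t) f). split. apply (idem_mul HS). apply (src_idem HS). exact Hf.
    rewrite (ile_src HS _ _ Hst). rewrite Hsd.
    pose proof (ile_src HS _ _ Htz) as Et. pose proof (ile_src HS _ _ Hdz) as Ed.
    set (st := src mul inv t) in *. set (sd := src mul inv d) in *.
    rewrite Et at 1. rewrite Ed at 1. norm HS.
    rewrite (commr HS _ _ _ (src_idem HS t) (src_idem HS d)). reflexivity.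
Qed.
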